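(* There exist instances (with three advertisers, a joint distribution of their values, information structures with and without the data, and a price of the data) of the two-stage game in which advertisers first simultaneously decide whether to purchase a data source and then bid optimally in a second-price auction, such that the purchase-stage game has no pure strategy equilibrium.
   Context: In the purchase stage each advertiser pays a fixed price for the data if she buys it; buying the data reveals (more) information about her value. Afterwards, each advertiser bids in a second-price auction given her information, and payoffs are expected auction utility minus the price paid for data. *)

(* Defs.v *)
From HB Require Import structures.
From mathcomp Require Import all_boot all_order all_algebra.
Set Implicit Arguments. Unset Strict Implicit. Unset Printing Implicit Defensive.
Import Order.TTheory GRing.Theory Num.Theory.
Local Open Scope ring_scope.

(* Information structures are signal
   functions [sig i : Omega -> S]: advertiser i observes [sig i w]. *)

Section Game.
Variables (Omega S : finType) (p : Omega -> rat).

Definition cond_exp (f : Omega -> rat) (sig : Omega -> S) (w : Omega) : rat :=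
  (\sum_(x | sig x == sig w) p x * f x) / (\sum_(x | sig x == sig w) p x).

Variables (v : 'I_3 -> Omega -> rat)
          (sig0 sig1 : 'I_3 -> Omega -> S)     (* info without / with data *)
          (c : rat).

(* Purchase profile a : a i = true iff advertiser i buys the data. *)
Definition info (a : 'I_3 -> bool) (i : 'I_3) : Omega -> S :=
  if a i then sig1 i else sig0 i.

(* Optimal (truthful) bid in the second-price auction: the expected value
   conditional on one's information. *)
Definition bid (a : 'I_3 -> bool) (i : 'I_3) (w : Omega) : rat :=
  cond_exp (v i) (info a i) w.

(* Second-price auction, highest bid wins, ties broken uniformly at random,
   winner pays the highest competing bid.  Ex-post expected utility of i. *)
Definition spa_util (b : 'I_3 -> rat) (i : 'I_3) (vi : rat) : rat :=
  let W := [set j : 'I_3 | [forall k : 'I_3, b k <= b j]] in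
  let second := \big[Num.max/0]_(j < 3 | j != i) b j in
  if i \in W then (vi - second) / (#|W|)%:R else 0.

Definition auction_payoff (a : 'I_3 -> bool) (i : 'I_3) : rat :=
  \sum_(w : Omega) p w * spa_util (fun j => bid a j w) i (v i w).

Definition payoff (a : 'I_3 -> bool) (i : 'I_3) : rat :=
  auction_payoff a i - (if a i then c else 0).

Definition deviate (a : 'I_3 -> bool) (i : 'I_3) (x : bool) : 'I_3 -> bool :=
  fun j => if j == i then x else a j.

Definition pure_NE (a : 'I_3 -> bool) : Prop :=
  forall (i : 'I_3) (x : bool), payoff (deviate a i x) i <= payoff a i.

End Game.

Definition valid_instance (Omega S : finType) (p : Omega -> rat)
    (v : 'I_3 -> Omega -> rat) (sig0 sig1 : 'I_3 -> Omega -> S) (c : rat) : Prop :=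
  [/\ (forall w, 0 <= p w),
      \sum_(w : Omega) p w = 1,
      (forall i w, 0 <= v i w),
      (* the data reveals (weakly) more information: sig1 i refines sig0 i *)
      (forall i w w', sig1 i w = sig1 i w' -> sig0 i w = sig0 i w')
    & 0 <= c].

(* Main.v *)
Require Import Defs.
From HB Require Import structures.
From mathcomp Require Import all_boot all_order all_algebra.
From Stdlib Require Import FunctionalExtensionality.
Import Order.TTheory GRing.Theory Num.Theory.
Local Open Scope ring_scope.

Definition o0 : 'I_3 := @Ordinal 3 0 isT.
Definition o1 : 'I_3 := @Ordinal 3 1 isT.
Definition o2 : 'I_3 := @Ordinal 3 2 isT.
Lemma ie3 : index_enum 'I_3 = [:: o0; o1; o2].
Proof.
apply: (inj_map val_inj). rewrite /index_enum unlock /= -enumT. exact: val_enum_ord.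
Qed.
Lemma big3 (R : Type) (idx : R) op (P : pred 'I_3) (F : 'I_3 -> R) :
  \big[op/idx]_(i : 'I_3 | P i) F i =
  (if P o0 then op (F o0) else id) ((if P o1 then op (F o1) else id) ((if P o2 then op (F o2) else id) idx)).
Proof. by rewrite unlock /reducebig ie3 /=; case: (P o0); case: (P o1); case: (P o2). Qed.

Lemma ord3E (k : 'I_3) : k = o0 \/ k = o1 \/ k = o2.
Proof.
case: k => [[|[|[|//]]] Hk].
- by left; apply: val_inj.
- by right; left; apply: val_inj.
- by right; right; apply: val_inj.
Qed.

Lemma forall3 (P : pred 'I_3) : [forall k, P k] = [&& P o0, P o1 & P o2].
Proof.
apply/forallP/and3P => [H|[H0 H1 H2] k]; first by split; apply H.
by case: (ord3E k) => [->|[->|->]].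
Qed.

Lemma card3 (P : pred 'I_3) : #|[set j : 'I_3 | P j]| = (P o0 + P o1 + P o2)%N.
Proof.
rewrite cardsE -sum1_card big3 /= -!topredE /=.
by case: (P o0); case: (P o1); case: (P o2).
Qed.

Lemma spaE3 b i vi : spa_util b i vi =
  let W j := [&& b o0 <= b j, b o1 <= b j & b o2 <= b j] in
  if W i then (vi - \big[Num.max/0]_(j < 3 | j != i) b j) / ((W o0 + W o1 + W o2)%N)%:R else 0.
Proof. by rewrite /spa_util /= inE card3 !forall3. Qed.

Definition vv (i : 'I_3) (w : 'I_3) : rat :=
  match val i, val w with
  | 0%N, 0%N => 2%:R | 0%N, 1%N => 2%:R | 0%N, _ => 0
  | 1%N, 0%N => 0 | 1%N, 1%N => 3%:R | 1%N, _ => 2%:R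
  | _, 0%N => 0 | _, 1%N => 0 | _, _ => 1 end.
Definition s0 (i : 'I_3) (w : 'I_3) : bool := false.
Definition s1 (i : 'I_3) (w : 'I_3) : bool :=
  match val i, val w with
  | 1%N, 2%N => true | _, 0%N => true | _, _ => false end.
Definition pp (w : 'I_3) : rat := 3%:R^-1.
Definition cc : rat := 8%:R^-1.

Definition prof (x y z : bool) : 'I_3 -> bool :=
  fun i => match val i with 0%N => x | 1%N => y | _ => z end.

Lemma prof_eta (a : 'I_3 -> bool) : a = prof (a o0) (a o1) (a o2).
Proof.
apply: functional_extensionality => k.
by case: (ord3E k) => [->|[->|->]].
Qed.

Lemma noNE a i x :
  payoff pp vv s0 s1 cc a i < payoff pp vv s0 s1 cc (deviate a i x) i ->
  ~ pure_NE pp vv s0 s1 cc a.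
Proof. by move=> H /(_ i x); rewrite leNgt H. Qed.

Ltac crunch := rewrite /payoff /auction_payoff !big3 !spaE3 /bid /cond_exp /info !big3;
  vm_compute; reflexivity.

Theorem mainTheorem11 :
  exists (Omega S : finType) (p : Omega -> rat) (v : 'I_3 -> Omega -> rat)
         (sig0 sig1 : 'I_3 -> Omega -> S) (c : rat),
    valid_instance p v sig0 sig1 c /\
    forall a : 'I_3 -> bool, ~ pure_NE p v sig0 sig1 c a.
Proof.
exists 'I_3, bool, pp, vv, s0, s1, cc; split.
  split.
  - by move=> w; rewrite /pp; vm_compute.
  - by rewrite big3; vm_compute.
  - by move=> i w; case: (ord3E i) => [->|[->|->]]; case: (ord3E w) => [->|[->|->]]; vm_compute.
  - by [].
  - by vm_compute.
move=> a; rewrite (prof_eta a).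
case: (a o0); case: (a o1); case: (a o2).
- by apply: (@noNE _ o2 false); crunch.
- by apply: (@noNE _ o1 false); crunch.
- by apply: (@noNE _ o2 false); crunch.
- by apply: (@noNE _ o0 false); crunch.
- by apply: (@noNE _ o2 false); crunch.
- by apply: (@noNE _ o0 true); crunch.
- by apply: (@noNE _ o2 false); crunch.
- by apply: (@noNE _ o1 true); crunch.
Qed.
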